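(* Consider problem (P) under Assumptions (A1)–(A3) with $\inf_{x\in\mathcal{X}}f(x)>-\infty$, let $x^0\in\mathcal{X}$, and let $\varepsilon>0$. Then the SMIL algorithm terminates after finitely many iterations, returning a point $x^k\in\mathcal{X}$ with $\Psi(x^k;\Delta_k)\le\varepsilon$, i.e. an $\varepsilon$-critical point of (P).
   Context: Problem (P): minimize $f(x)$ subject to $x\in\mathcal{X}:=\bar{\mathcal{X}}\cap\{x\in\mathbb{R}^n : x_i\in\mathbb{Z}\ \forall i\in\mathcal{I}\}$, with $\bar{\mathcal{X}}\subseteq\mathbb{R}^n$ a closed convex polyhedral set, $\mathcal{I}\subseteq\{1,\dots,n\}$, $\mathcal{X}\ne\emptyset$, $f:\mathbb{R}^n\to\mathbb{R}$. Write $x=(u,z)$ with $u$ the components with indices not in $\mathcal{I}$ and $z$ those in $\mathcal{I}$. Assumptions: (A1) $f$ is $C^1$ with locally Lipschitz gradient; (A2) $f(u,z)=f_1(u)+\langle f_2,z\rangle$; (A3) the feasible integer parts $\{z:(u,z)\in\mathcal{X}\}$ form a bounded set. $\|x\|_{PL}$ is the $\ell_1$- or $\ell_\infty$-norm of the components with indices not in $\mathcal{I}$; $\mathbb{B}_{PL}(x,\Delta):=\{w:\|w-x\|_{PL}\le\Delta\}$. Criticality measure: $\Psi(x;\Delta):=\max\{\langle\nabla f(x),x-w\rangle : w\in\mathcal{X}\cap\mathbb{B}_{PL}(x,\Delta)\}$; $\bar x\in\mathcal{X}$ is $\varepsilon$-$\Delta$-critical if $\Psi(\bar x;\Delta)\le\varepsilon$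 and $\varepsilon$-critical if it is $\varepsilon$-$\Delta$-critical for some $\Delta>0$. SMIL algorithm. Input $x^0\in\mathcal{X}$, $\varepsilon\ge0$; parameters $\Delta_0>0$, $\varrho,\kappa\in(0,1)$, $\kappa_m\in(0,1]$. Set $m_0:=f(x^0)$. For $k=0,1,2,\dots$: (S1) compute $x^{k+1}\in\arg\min\{\langle\nabla f(x^k),x\rangle : x\in\mathcal{X}\cap\mathbb{B}_{PL}(x^k,\Delta_k)\}$; (S2) set $a_k:=m_k-f(x^{k+1})$ and $\Psi_k:=\langle\nabla f(x^k),x^k-x^{k+1}\rangle$ (so $\Psi_k=\Psi(x^k;\Delta_k)$); (S3) if $\Psi_k\le\varepsilon$, return $x^k$; (S4) if $a_k<\varrho\Psi_k$, set $\Delta_k\leftarrow\kappa\Delta_k$ and go back to (S1); (S5) set $m_{k+1}:=(1-\kappa_m)m_k+\kappa_m f(x^{k+1})$; (S6) choose $\Delta_{k+1}$ either by the rule $\Delta_{k+1}=\kappa\Delta_k$ if $\rho_k<\varrho_1$, $=\Delta_k$ if $\varrho_1\le\rho_k<\varrho_2$, $=\Delta_k/\kappa$ if $\rho_k\ge\varrho_2$, where $\rho_k:=a_k/\Psi_k$ and $\varrho\le\varrho_1<\varrho_2<1$; or by a reset $\Delta_{k+1}\in[\Delta_{\min},\Delta_{\max}]$, $0<\Delta_{\min}\le\Delta_{\max}$. *)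

(* Defs.v *)
From HB Require Import structures.
From mathcomp Require Import all_boot all_order all_algebra.
From mathcomp Require Import all_classical all_reals all_analysis.
Set Implicit Arguments. Unset Strict Implicit. Unset Printing Implicit Defensive.
Import Order.TTheory GRing.Theory Num.Theory.
Import numFieldNormedType.Exports.
Local Open Scope classical_set_scope.
Local Open Scope ring_scope.

Section SMIL.
Context {R : realType} {n : nat}.
Notation vec := 'rV[R]_n.

Definition dot (x y : vec) : R := \sum_(i < n) x ord0 i * y ord0 i.

Definition polyhedron (p : nat) (A : 'M[R]_(p, n)) (b : 'cV[R]_p) : set vec :=
  [set x | forall j : 'I_p, (A *m x^T) j ord0 <= b j ord0].

Definition feasible (Xbar : set vec) (I : {set 'I_n}) : set vec :=
  [set x | Xbar x /\ forall i, i \in I -> x ord0 i \is a Num.int].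

Definition normPL (I : {set 'I_n}) (l1 : bool) (x : vec) : R :=
  if l1 then \sum_(i < n | i \notin I) `|x ord0 i|
  else \big[Num.max/0]_(i < n | i \notin I) `|x ord0 i|.

Definition ballPL I l1 (x : vec) (D : R) : set vec :=
  [set w | normPL I l1 (w - x) <= D].

(* Criticality measure Psi(x; Delta), with g the gradient of f *)
Definition Psi (X : set vec) I l1 (g : vec -> vec) (x : vec) (D : R) : R :=
  sup [set dot (g x) (x - w) | w in X `&` ballPL I l1 x D].

Definition eps_Delta_critical X I l1 g (eps : R) (x : vec) (D : R) : Prop :=
  X x /\ Psi X I l1 g x D <= eps.

Definition eps_critical X I l1 g (eps : R) (x : vec) : Prop :=
  exists D, 0 < D /\ eps_Delta_critical X I l1 g eps x D.

(* y is a valid output of step (S1) at iterate x with radius D *)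
Definition is_argmin X I l1 (g : vec -> vec) (x : vec) (D : R) (y : vec) : Prop :=
  X y /\ ballPL I l1 x D y /\
  forall w, X w -> ballPL I l1 x D w -> dot (g x) y <= dot (g x) w.

(* Admissible choices of Delta_{k+1} in step (S6) *)
Definition next_radius (kappa rho1 rho2 Dmin Dmax : R) (a Ps D D' : R) : Prop :=
  (let r := a / Ps in
     (r < rho1 /\ D' = kappa * D)
  \/ (rho1 <= r /\ r < rho2 /\ D' = D)
  \/ (rho2 <= r /\ D' = D / kappa))
  \/ (Dmin <= D' /\ D' <= Dmax).

(* smil_terminates x m D : every run of SMIL started at step (S1) with current
   iterate x, reference value m_k = m and radius Delta_k = D, whatever the
   choices made in (S1) and (S6), terminates after finitely many steps
   (inner loop (S4) included), and returns at (S3) a point x^k together with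
   its current radius Delta_k > 0 such that x^k is eps-Delta_k-critical. *)
Inductive smil_terminates (X : set vec) (I : {set 'I_n}) (l1 : bool)
    (f : vec -> R) (g : vec -> vec)
    (rho kappa kappam rho1 rho2 Dmin Dmax eps : R) : vec -> R -> R -> Prop :=
| smil_step (x : vec) (m D : R) :
    (exists y, is_argmin X I l1 g x D y) ->
    (forall y, is_argmin X I l1 g x D y ->
       let a := m - f y in
       let Ps := dot (g x) (x - y) in
       (* (S3) return *)
       (Ps <= eps -> 0 < D /\ eps_Delta_critical X I l1 g eps x D) /\
       (* (S4) shrink radius, redo (S1) *)
       (eps < Ps -> a < rho * Ps ->
          smil_terminates X I l1 f g rho kappa kappam rho1 rho2 Dmin Dmax eps
            x m (kappa * D)) /\
       (* (S5)-(S6) accept and move to the next iteration *)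
       (eps < Ps -> rho * Ps <= a ->
          forall D', next_radius kappa rho1 rho2 Dmin Dmax a Ps D D' ->
          smil_terminates X I l1 f g rho kappa kappam rho1 rho2 Dmin Dmax eps
            y ((1 - kappam) * m + kappam * f y) D')) ->
    smil_terminates X I l1 f g rho kappa kappam rho1 rho2 Dmin Dmax eps x m D.

End SMIL.

(* Main.v *)
Require Import Defs.
From HB Require Import structures.
From mathcomp Require Import all_boot all_order all_algebra.
From mathcomp Require Import all_classical all_reals all_analysis.
From mathcomp Require Import ring lra.
Import Order.TTheory GRing.Theory Num.Theory.
Import numFieldNormedType.Exports.
Local Open Scope classical_set_scope.
Local Open Scope ring_scope.

Section H.
Context {R : realType} {n : nat}.
Notation vec := 'rV[R]_n.

Lemma dotB (u v w : vec) : dot u (v - w) = dot u v - dot u w.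
Proof. by rewrite /dot -sumrB; apply: eq_bigr => i _; rewrite !mxE mulrBr. Qed.

Lemma dotD (u v w : vec) : dot u (v + w) = dot u v + dot u w.
Proof. by rewrite /dot -big_split; apply: eq_bigr => i _; rewrite !mxE mulrDr. Qed.

Lemma dotBl (u v w : vec) : dot (u - v) w = dot u w - dot v w.
Proof. by rewrite /dot -sumrB; apply: eq_bigr => i _; rewrite !mxE mulrBl. Qed.

Lemma entry_le_norm (v : vec) i : `|v ord0 i| <= `|v|.
Proof.
rewrite [leRHS]/Num.Def.normr/= mx_normrE.
by apply: le_trans; last exact: (le_bigmax _ _ (ord0, i)).
Qed.

Lemma norm_le_entries (v : vec) D : 0 <= D -> (forall i, `|v ord0 i| <= D) -> `|v| <= D.
Proof.
move=> D0 H.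
rewrite /Num.Def.normr/= mx_normrE (bigmax_le _ D0)//= => -[i j] _.
by rewrite (ord1 i); apply: H.
Qed.

Lemma abs_dot_le (u v : vec) : `|dot u v| <= n%:R * (`|u| * `|v|).
Proof.
rewrite /dot; apply: le_trans (ler_norm_sum _ _ _) _.
apply: (le_trans (_ : _ <= \sum_(i < n) (`|u| * `|v|))).
  by apply: ler_sum => i _; rewrite normrM ler_pM ?entry_le_norm.
by rewrite sumr_const card_ord mulr_natl.
Qed.
End H.

Section H2.
Context {R : realType} {n : nat}.
Notation vec := 'rV[R]_n.

Lemma taylor_bound (f : vec -> R) (g : vec -> vec)
  (hdiff : forall x, differentiable f x /\ forall h, 'd f x h = dot (g x) h)
  x r L (hr : 0 < r)
  (hL : forall y z, `|y - x| < r -> `|z - x| < r -> `|g y - g z| <= L * `|y - z|)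
  d : `|d| < r ->
  `|f (x + d) - f x - dot (g x) d| <= n%:R * `|L| * (`|d| * `|d|).
Proof.
move=> hd.
pose phi (t : R) := f (x + t *: d).
have E t : (fun h : R => h^-1 *: ((phi \o shift t) (h *: 1) - phi t)) =
    (fun h : R => h^-1 *: ((f \o shift (x + t *: d)) (h *: d) - f (x + t *: d))).
  apply: funext => h /=; rewrite /phi /=; congr (_ *: (f _ - _)).

  by rewrite [h%:A]mulr1 scalerDl addrCA.
have D (t : R) : is_derive t (1 : R) phi (dot (g (x + t *: d)) d).
  have [df dg] := hdiff (x + t *: d).
  split; first by rewrite /derivable E; exact: diff_derivable.
  by rewrite /derive E -/(derive _ _ _) deriveE // dg.
have [c c01 hc] : exists2 c, c \in `]0, 1[%R &
    phi 1 - phi 0 = dot (g (x + c *: d)) d * (1 - 0).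
  apply: (@MVT R phi (fun c => dot (g (x + c *: d)) d)) => //.

  apply: derivable_within_continuous => t _.
  exact: (@ex_derive _ _ _ _ _ _ _ (D t)).
move: hc; rewrite /phi scale1r scale0r addr0 subr0 mulr1 => ->.
rewrite -dotBl; apply: le_trans (abs_dot_le _ _) _.
rewrite -mulrA; apply: ler_pM => //.
rewrite mulrA; apply: ler_pM => //.
have hc0 : 0 <= c <= 1 by move: c01; rewrite in_itv /= => /andP[/ltW -> /ltW ->].
have hcd : `|c *: d| <= `|d|.
  by rewrite normrZ ger0_norm ?(andP hc0).1 // ler_piMl // (andP hc0).2.
apply: le_trans (hL (x + c *: d) x _ _) _.
- by rewrite addrC addKr; apply: le_lt_trans hd.
- by rewrite subrr normr0.
rewrite addrC addKr; apply: (le_trans (ler_wpM2r (normr_ge0 _) (ler_norm L))).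
exact: (ler_wpM2l (normr_ge0 _) hcd).
Qed.
End H2.

Section H3.
Context {R : realType} {n : nat}.
Notation vec := 'rV[R]_n.

Lemma dot_delta (u : vec) i : dot u (delta_mx ord0 i) = u ord0 i.
Proof.
rewrite /dot (bigD1 i) //= big1 ?addr0 => [|j ji]; rewrite !mxE.
  by rewrite !eqxx mulr1.
by rewrite (negbTE ji) andbF mulr0.
Qed.

Lemma grad_I (I : {set 'I_n}) (f : vec -> R) (g : vec -> vec)
  (hdiff : forall x, differentiable f x /\ forall h, 'd f x h = dot (g x) h)
  (f1 : vec -> R) (f2 : vec)
  (hf1 : forall x y : vec, (forall i, i \notin I -> x ord0 i = y ord0 i) -> f1 x = f1 y)
  (hf : forall x : vec, f x = f1 x + \sum_(i < n | i \in I) f2 ord0 i * x ord0 i)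
  x i : i \in I -> g x ord0 i = f2 ord0 i.
Proof.
move=> iI; have [df dg] := hdiff x.
rewrite -dot_delta -dg -deriveE //.
rewrite /derive; apply: lim_near_cst; first exact: Rhausdorff.

near=> h.
have h0 : h != 0 by near: h; exact: nbhs_dnbhs_neq.
rewrite /= !hf.
rewrite (hf1 (h *: delta_mx ord0 i + x) x); last first.
  move=> j jI; rewrite !mxE; have -> : (j == i) = false.
    by apply/negbTE; apply: contraNneq jI => ->.
  by rewrite andbF mulr0 add0r.

rewrite opprD addrACA subrr add0r -sumrB (bigD1 i) //= big1; last first.
  move=> j /andP[_ ji]; rewrite !mxE.
  by rewrite (negbTE ji) andbF mulr0 add0r subrr.
rewrite addr0 !mxE.
by rewrite !eqxx /= mulr1 mulrDr addrK /GRing.scale /= mulrCA mulVf // mulr1.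
Unshelve. all: by end_near.
Qed.
End H3.

Section H4.
Context {R : realType} {n : nat}.
Notation vec := 'rV[R]_n.

Lemma int_closed : closed [set r : R | r \is a Num.int].
Proof.
rewrite closedE => r Hr /=; apply: contrapT => nr; apply: Hr.
set k := Num.floor r.
have h1 : k%:~R < r.
  rewrite lt_neqAle Num.Theory.floor_le andbT; apply/eqP => E.
  by apply: nr; rewrite -E; exact: intr_int.
have h2 : r < (k + 1)%:~R := floorD1_gt r.
near=> y.
have hy1 : k%:~R < y by near: y; exact: lt_nbhsr.
have hy2 : y < (k + 1)%:~R by near: y; exact: lt_nbhsl.
move=> /intrP [m ym]; rewrite ym ltr_int in hy1; rewrite ym ltr_int in hy2.
by move: hy2; rewrite ltzD1 leNgt hy1.
Unshelve. all: by end_near.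
Qed.

Lemma cont_coordB (x : vec) i : continuous (fun w : vec => `|w ord0 i - x ord0 i|).
Proof.
have c1 : continuous (fun w : vec => w ord0 i - x ord0 i).
  move=> w.
  have h1 := @coord_continuous R 1 n ord0 i w.
  have h2 := @cst_continuous _ R (x ord0 i) w.
  have := continuousB h1 h2; exact.
move=> w; have h3 := c1 w.
have h4 : {for (w ord0 i - x ord0 i), continuous (Num.norm : R -> R)}.
  exact: norm_continuous.
have := continuous_comp h3 h4; exact.
Qed.

Lemma cont_normPL (I : {set 'I_n}) l1 (x : vec) :
  continuous (fun w : vec => normPL I l1 (w - x)).
Proof.
have E : (fun w : vec => normPL I l1 (w - x)) = (fun w => if l1 then
     \sum_(i < n | i \notin I) `|w ord0 i - x ord0 i|
     else \big[Num.max/0]_(i < n | i \notin I) `|w ord0 i - x ord0 i|).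
  apply: funext => w; rewrite /normPL; case: l1.
    by apply: eq_bigr => i _; rewrite !mxE.
  by apply: eq_bigr => i _; rewrite !mxE.
rewrite E {E} => w; case: l1.
- apply: (cvg_big add_continuous); first exact: (@nbhs_filter _ w).
  by move=> i _; exact: cont_coordB.
- apply: (cvg_big max_continuous); first exact: (@nbhs_filter _ w).
  by move=> i _; exact: cont_coordB.
Qed.

Lemma cont_lin (c : 'I_n -> R) : continuous (fun w : vec => \sum_(k < n) c k * w ord0 k).
Proof.
move=> w; apply: (cvg_big add_continuous); first exact: (@nbhs_filter _ w).
move=> i _; have h1 := @coord_continuous R 1 n ord0 i w.
have h2 := @cst_continuous _ R (c i) w.
have := continuousM h2 h1; exact.
Qed.
End H4.

Section H5.
Context {R : realType} {n : nat}.
Notation vec := 'rV[R]_n.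

Lemma entry_le_normPL (I : {set 'I_n}) l1 (v : vec) i :
  i \notin I -> `|v ord0 i| <= normPL I l1 v.
Proof.
move=> iI; rewrite /normPL; case: l1.
  rewrite (bigD1 i) //= lerDl; apply: sumr_ge0 => j _; exact: normr_ge0.
exact: (le_bigmax_cond 0 (fun j => `|v ord0 j|) iI).
Qed.

Lemma normPL_ge0 (I : {set 'I_n}) l1 (v : vec) : 0 <= normPL I l1 v.
Proof.
rewrite /normPL; case: l1; first by apply: sumr_ge0 => j _; exact: normr_ge0.
exact: bigmax_ge_id.
Qed.

Lemma normPL0 (I : {set 'I_n}) l1 : normPL I l1 (0 : vec) = 0.
Proof.
rewrite /normPL; case: l1.
  by rewrite big1 // => i _; rewrite mxE normr0.
apply/le_anti; rewrite bigmax_ge_id andbT.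
by apply: bigmax_le => // i _; rewrite mxE normr0.
Qed.

Lemma closed_feasible (p : nat) (A : 'M[R]_(p, n)) (b : 'cV[R]_p) (I : {set 'I_n}) :
  closed (feasible (polyhedron A b) I).
Proof.
have -> : feasible (polyhedron A b) I =
  (\bigcap_(j in setT) ((fun w : vec => \sum_(k < n) A j k * w ord0 k) @^-1`
        [set r | r <= b j ord0])) `&`
  (\bigcap_(i in [set i | i \in I]) ((fun w : vec => w ord0 i) @^-1`
        [set r : R | r \is a Num.int])).
  apply/seteqP; split => w /=.
    move=> [hA hI]; split => [j _ | i iI]; last exact: hI.
    by have := hA j; rewrite !mxE; under eq_bigr do rewrite mxE.
  move=> [hA hI]; split => [j | i iI]; last exact: hI.
  by have := hA j Logic.I; rewrite !mxE; under eq_bigr do rewrite mxE.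
apply: closedI.
  apply: closed_bigI => j _.
  apply: preimage_closed; last exact: closed_le.
  by move=> w _; exact: cont_lin.
apply: closed_bigI => i _.
apply: preimage_closed; last exact: int_closed.
by move=> w _; exact: coord_continuous.
Qed.
End H5.

Section H6.
Context {R : realType} {n : nat}.
Notation vec := 'rV[R]_n.

Lemma argmin_exists (p : nat) (A : 'M[R]_(p, n)) (b : 'cV[R]_p) (I : {set 'I_n})
  l1 (g : vec -> vec) (x : vec) D Mb
  (hbnd : forall w, feasible (polyhedron A b) I w -> forall i, i \in I -> `|w ord0 i| <= Mb)
  (hx : feasible (polyhedron A b) I x) (hD : 0 <= D) :
  exists y, is_argmin (feasible (polyhedron A b) I) I l1 g x D y.
Proof.
set S := feasible (polyhedron A b) I `&` ballPL I l1 x D.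
have S0 : S !=set0 by exists x; split => //; rewrite /ballPL /= subrr normPL0.
have cS : compact S.
  apply: bounded_closed_compact.
    exists (`|Mb| + `|x| + D); split; first by rewrite num_real.
    move=> M hM w [Xw Bw] /=.
    apply: ltW; apply: le_lt_trans hM.
    apply: norm_le_entries => [|i].
      by rewrite !addr_ge0.
    case: (boolP (i \in I)) => iI.
      apply: le_trans (hbnd _ Xw _ iI) _.
      apply: le_trans (ler_norm Mb) _; by rewrite -addrA lerDl addr_ge0.
    have h1 : `|w ord0 i - x ord0 i| <= D.
      apply: le_trans Bw; have := @entry_le_normPL R n I l1 (w - x) i iI.
      by rewrite !mxE.
    have h2 : `|w ord0 i| <= `|w ord0 i - x ord0 i| + `|x ord0 i|.
      by rewrite -[X in `|X| <= _](subrK (x ord0 i)) ler_normD.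
    apply: le_trans h2 _; rewrite [leRHS]addrC lerD //.
    apply: le_trans (entry_le_norm x i) _.
    by rewrite lerDr.
  apply: closedI; first exact: closed_feasible.
  have -> : ballPL I l1 x D = (fun w : vec => normPL I l1 (w - x)) @^-1` [set r | r <= D] by [].
  apply: preimage_closed; last exact: closed_le.
  by move=> w _; exact: cont_normPL.
have cf : {within S, continuous (fun w : vec => dot (g x) w)}.
  by apply: continuous_subspaceT; exact: cont_lin.
have [c cS' hc] := compact_EVT_min S0 cS cf.
move: cS'; rewrite inE => -[Xc Bc].
exists c; split => //; split => // w Xw Bw.
by apply: hc; rewrite inE.
Qed.
End H6.

Section H7.
Context {R : realType} {n : nat}.
Notation vec := 'rV[R]_n.

Lemma kappa_pow (kappa D delta : R) : 0 < kappa < 1 -> 0 < delta ->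
  exists k : nat, kappa ^+ k * D <= delta.
Proof.
move=> /andP[k0 k1] d0.
have e0 : 0 < delta / (`|D| + 1) by rewrite divr_gt0 // ltr_wpDl.
have := @cvg_expr R kappa; rewrite gtr0_norm // => /(_ k1).
move/cvgrPdist_lt => /(_ _ e0) [N _ HN].
exists N; have := HN N (leqnn N); rewrite sub0r normrN gtr0_norm ?exprn_gt0 //.
move=> h; apply: le_trans (ler_norm _) _.
rewrite normrM gtr0_norm ?exprn_gt0 //.
have hp : 0 < `|D| + 1 by rewrite ltr_wpDl.
rewrite ltr_pdivlMr // in h.
apply: le_trans (ltW h).
apply: ler_pM => //.
  by rewrite exprn_ge0 // ltW.
by rewrite lerDl.
Qed.

Lemma Psi_le (X : set vec) I l1 (g : vec -> vec) x D y :
  is_argmin X I l1 g x D y -> Psi X I l1 g x D <= dot (g x) (x - y).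
Proof.
move=> [Xy [By hy]]; apply: ge_sup; first by exists (dot (g x) (x - y)), y.
move=> _ [w [Xw Bw] <-]; rewrite !dotB lerD2l lerN2; exact: hy.
Qed.
End H7.

Section H8.
Context {R : realType} {n : nat}.
Notation vec := 'rV[R]_n.

Lemma descent (X : set vec) (I : {set 'I_n}) l1 (f : vec -> R) (g : vec -> vec)
  (hdiff : forall x, differentiable f x /\ forall h, 'd f x h = dot (g x) h)
  (f1 : vec -> R) (f2 : vec)
  (hf1 : forall x y : vec, (forall i, i \notin I -> x ord0 i = y ord0 i) -> f1 x = f1 y)
  (hf : forall x : vec, f x = f1 x + \sum_(i < n | i \in I) f2 ord0 i * x ord0 i)
  (hlip : forall x, exists r, 0 < r /\ exists L, forall y z,
            `|y - x| < r -> `|z - x| < r -> `|g y - g z| <= L * `|y - z|)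
  rho eps x : rho < 1 -> 0 < eps ->
  exists2 delta, 0 < delta & forall D y, D <= delta ->
    is_argmin X I l1 g x D y -> eps < dot (g x) (x - y) ->
    rho * dot (g x) (x - y) <= f x - f y.
Proof.
move=> hrho heps.
have [r [r0 [L hL]]] := hlip x.
set C := n%:R * `|L|.
have C0 : 0 <= C by rewrite mulr_ge0.
set delta := Num.min 1 (Num.min (r / 2) ((1 - rho) * eps / (C + 1))).
have hd0 : 0 < delta.
  rewrite !lt_min ltr01 divr_gt0 //= divr_gt0 ?mulr_gt0 ?subr_gt0 //.
  by rewrite ltr_wpDl.
exists delta => // D y hD [Xy [By hy]] hPs.
set y2 : vec := \row_i (if i \in I then x ord0 i else y ord0 i).
set d := y2 - x.
have hdn : `|d| <= delta.
  apply: norm_le_entries; first exact: ltW.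
  move=> i; rewrite !mxE; case: ifP => iI; first by rewrite subrr normr0 ltW.
  apply: le_trans hD; apply: le_trans By.
  have := @entry_le_normPL R n I l1 (y - x) i (negbT iI).
  by rewrite !mxE.
have hd1 : delta <= 1 by rewrite ge_min lexx.
have hd2 : delta <= r / 2 by rewrite !ge_min lexx orbT.
have hd3 : delta <= (1 - rho) * eps / (C + 1) by rewrite !ge_min lexx !orbT.
have hdr : `|d| < r.
  apply: le_lt_trans hdn _; apply: le_lt_trans hd2 _.
  by rewrite ltr_pdivrMr // ltr_pMr // ltr1n.
have HT := taylor_bound f g hdiff x r L r0 hL d hdr.
rewrite -/C in HT.
have Exd : x + d = y2 by rewrite /d addrC subrK.
rewrite Exd in HT.
set S := fun z : vec => \sum_(i < n | i \in I) f2 ord0 i * z ord0 i.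
have Hfy : f y = f y2 - S x + S y.
  rewrite !hf (hf1 y2 y); last by move=> i iI; rewrite mxE (negbTE iI).
  have -> : \sum_(i < n | i \in I) f2 ord0 i * y2 ord0 i = S x.
    by apply: eq_bigr => i iI; rewrite mxE iI.
  by rewrite /S addrK.
have HPs : dot (g x) (x - y) = - dot (g x) d + (S x - S y).
  have -> : x - y = - d + (y2 - y) by rewrite /d opprB addrA subrK.
  have dN : dot (g x) (- d) = - dot (g x) d.
    by rewrite -sub0r dotB [dot _ 0]/dot big1 ?sub0r // => i _; rewrite mxE mulr0.
  rewrite dotD dN; congr (_ + _).
  rewrite /S /dot -sumrB [RHS]big_mkcond /=; apply: eq_bigr => i _; rewrite !mxE.
  case: ifP => iI; last by rewrite subrr mulr0.
  by rewrite (grad_I I f g hdiff f1 f2 hf1 hf x i iI) mulrBr.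
have Hb : C * (`|d| * `|d|) <= (1 - rho) * eps.
  have h1 : `|d| * `|d| <= delta.
    apply: le_trans (_ : `|d| * 1 <= delta); last by rewrite mulr1.
    apply: ler_wpM2l => //; exact: le_trans hdn hd1.
  apply: le_trans (_ : (C + 1) * delta <= _).
    apply: le_trans (_ : C * delta <= _); first exact: ler_wpM2l.
    by apply: ler_wpM2r; [exact: ltW | rewrite lerDl].
  by rewrite mulrC -ler_pdivlMr ?ltr_wpDl.
have Hb2 : (1 - rho) * eps <= dot (g x) (x - y) - rho * dot (g x) (x - y).
  have -> : dot (g x) (x - y) - rho * dot (g x) (x - y) = (1 - rho) * dot (g x) (x - y).
    by rewrite mulrBl mul1r.
  apply: ler_wpM2l; last exact: ltW.
  by rewrite subr_ge0 ltW.
move: HT; rewrite ler_norml => /andP[HT1 HT2].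
rewrite Hfy; move: Hb2; rewrite HPs => Hb2.
lra.
Qed.
End H8.

Theorem mainTheorem9
  (R : realType) (n : nat)
  (p : nat) (A : 'M[R]_(p, n)) (b : 'cV[R]_p) (I : {set 'I_n})
  (l1 : bool)
  (f : 'rV[R]_n -> R) (g : 'rV[R]_n -> 'rV[R]_n)
  (hXne : exists x, feasible (polyhedron A b) I x)
  (hdiff : forall x, differentiable f x /\ forall h, 'd f x h = dot (g x) h)
  (hlip : forall x, exists r, 0 < r /\ exists L, forall y z,
            `|y - x| < r -> `|z - x| < r -> `|g y - g z| <= L * `|y - z|)
  (hsep : exists (f1 : 'rV[R]_n -> R) (f2 : 'rV[R]_n),
            (forall x y : 'rV[R]_n, (forall i, i \notin I -> x ord0 i = y ord0 i) -> f1 x = f1 y) /\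
            forall x : 'rV[R]_n, f x = f1 x + \sum_(i < n | i \in I) f2 ord0 i * x ord0 i)
  (hbnd : exists M, forall x, feasible (polyhedron A b) I x ->
            forall i, i \in I -> `|x ord0 i| <= M)
  (hinf : exists lb, forall x, feasible (polyhedron A b) I x -> lb <= f x)
  (x0 : 'rV[R]_n) (hx0 : feasible (polyhedron A b) I x0) (eps : R) (heps : 0 < eps)
  (D0 rho kappa kappam rho1 rho2 Dmin Dmax : R)
  (hD0 : 0 < D0) (hrho : 0 < rho < 1) (hkappa : 0 < kappa < 1)
  (hkappam : 0 < kappam <= 1)
  (hrho1 : rho <= rho1) (hrho12 : rho1 < rho2) (hrho2 : rho2 < 1)
  (hDmin : 0 < Dmin) (hDminmax : Dmin <= Dmax) :
  smil_terminates (feasible (polyhedron A b) I) I l1 f g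
    rho kappa kappam rho1 rho2 Dmin Dmax eps x0 (f x0) D0.
Proof.
have [f1 [f2 [hf1 hf]]] := hsep.
have [Mb hMb] := hbnd.
have [lb hlb] := hinf.
set X := feasible (polyhedron A b) I.
move: hrho hkappa hkappam => /andP[rho0 rho1'] /andP[ka0 ka1] /andP[km0 km1].
set c := kappam * rho * eps.
have c0 : 0 < c by rewrite !mulr_gt0.
have Hex : forall x D, X x -> 0 <= D -> exists y, is_argmin X I l1 g x D y.
  by move=> x D hx hD; exact: (argmin_exists p A b I l1 g x D Mb hMb hx hD).
suff main : forall N : nat, forall x m D, X x -> f x <= m -> m < lb + N%:R * c -> 0 < D ->
    smil_terminates X I l1 f g rho kappa kappam rho1 rho2 Dmin Dmax eps x m D.
  set t := `|(f x0 - lb) / c|.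
  have ht := @archi_boundP R t (normr_ge0 _).
  apply: (main (Num.Def.archi_bound t)) => //.
  have : f x0 - lb <= t * c.
    by rewrite /t normrM normfV (gtr0_norm c0) divfK ?gt_eqF // ler_norm.
  have : t * c < (Num.Def.archi_bound t)%:R * c by rewrite ltr_pM2r.
  lra.
elim => [|N IH] x m D Xx fxm hm hD.
  have := hlb x Xx; rewrite mul0r addr0 in hm; lra.
have [delta d0 Hdes] := descent X I l1 f g hdiff f1 f2 hf1 hf hlip rho eps x rho1' heps.
have Hacc : forall D y, 0 < D -> is_argmin X I l1 g x D y ->
    eps < dot (g x) (x - y) -> rho * dot (g x) (x - y) <= m - f y ->
    forall D', next_radius kappa rho1 rho2 Dmin Dmax (m - f y) (dot (g x) (x - y)) D D' ->
    smil_terminates X I l1 f g rho kappa kappam rho1 rho2 Dmin Dmax eps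
      y ((1 - kappam) * m + kappam * f y) D'.
  move=> D1 y hD1 [Xy _] hPs ha D' hD'.
  set Ps := dot (g x) (x - y) in hPs ha hD'.
  have h1 : kappam * (rho * eps) <= kappam * (rho * Ps).
    by apply: ler_wpM2l; [exact: ltW | apply: ler_wpM2l; [exact: ltW | exact: ltW]].
  have h2 : kappam * (rho * Ps) <= kappam * (m - f y).
    by apply: ler_wpM2l; [exact: ltW|].
  have h3 : 0 < rho * Ps by rewrite mulr_gt0 // (lt_trans heps hPs).
  have h4 : kappam * m <= m * 1 - (1 - kappam) * f y + 0 -> True by [].
  apply: IH => //.
  - have h5 : (1 - kappam) * f y <= (1 - kappam) * m.
      by apply: ler_wpM2l; [rewrite subr_ge0 | lra].
    lra.
  - rewrite /c -mulrA in hm *; rewrite -addn1 natrD mulrDl mul1r in hm.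
    have h6 : (1 - kappam) * m + kappam * f y = m - kappam * (m - f y) by ring.
    rewrite h6; lra.
  - have hk1 : 0 < D1 / kappa by rewrite divr_gt0.
    case: hD' => [[[_ ->]|[[_ [_ ->]]|[_ ->]]]|[hmin _]] //; first by rewrite mulr_gt0.
    exact: lt_le_trans hDmin hmin.
have Hstep : forall D, 0 < D ->
    (forall y, is_argmin X I l1 g x D y -> eps < dot (g x) (x - y) ->
       m - f y < rho * dot (g x) (x - y) ->
       smil_terminates X I l1 f g rho kappa kappam rho1 rho2 Dmin Dmax eps x m (kappa * D)) ->
    smil_terminates X I l1 f g rho kappa kappam rho1 rho2 Dmin Dmax eps x m D.
  move=> D1 hD1 H4; apply: smil_step; first exact: Hex (ltW hD1).
  move=> y hy /=; split; last split.
  - move=> hPs; split; first exact: hD1.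
    split; first exact: Xx.
    exact: le_trans (Psi_le _ _ _ _ _ _ _ hy) hPs.
  - exact: (H4 y hy).
  - move=> hPs ha D'; exact: (Hacc D1 y hD1 hy hPs ha D').
have Hin : forall k : nat, forall D, 0 < D -> kappa ^+ k * D <= delta ->
    smil_terminates X I l1 f g rho kappa kappam rho1 rho2 Dmin Dmax eps x m D.
  elim => [|k IHk] D1 hD1 hk.
    apply: (Hstep D1 hD1) => y hy hPs ha; exfalso.
    rewrite expr0 mul1r in hk.
    have h := Hdes D1 y hk hy hPs.
    have : m - f y < m - f y.
      by apply: lt_le_trans ha (le_trans h _); rewrite lerD2r.
    by rewrite ltxx.
  apply: (Hstep D1 hD1) => y hy hPs ha.
  apply: IHk; first by rewrite mulr_gt0.
  by rewrite mulrA -exprSr.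
have hk01 : 0 < kappa < 1 by rewrite ka0 ka1.
have [k hk] := kappa_pow kappa D delta hk01 d0.
exact: Hin k D hD hk.
Qed.
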